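(* (Quantum Efron–Stein inequality.) Let $\varrho=\rho_1\otimes\cdots\otimes\rho_n$ be a product state on $\mathcal K=\bigotimes_{i=1}^n\mathcal H_i$ (finite-dimensional Hilbert spaces) and let $X$ be an observable on $\mathcal K$. Then $$\mathrm{Var}_\varrho[X]\le\sum_{i=1}^n\mathbb E_\varrho[(\mathcal D_iX)^2].$$
   Context: $\mathbb E_\varrho[Y]=\mathrm{Tr}[\varrho Y]$ and $\mathrm{Var}_\varrho[X]=\mathbb E_\varrho[X^2]-\mathbb E_\varrho[X]^2$. For $i\in[n]$, $\mathcal E_iX=\mathrm{Tr}_i[(\rho_i\otimes I)X]$, regarded as an operator on $\mathcal K$ by tensoring with the identity on $\mathcal H_i$ (so $\mathcal E_i(Y_1\otimes\cdots\otimes Y_n)=\mathrm{Tr}[\rho_iY_i]\,Y_1\otimes\cdots\otimes I\otimes\cdots\otimes Y_n$ with $I$ in position $i$), and $\mathcal D_iX=X-\mathcal E_iX$. *)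

(* Defs.v *)
(* Finite-dimensional quantum operators over an abstract
   numeric closed field C (e.g. the complex numbers), with matrices indexed
   by a finite basis type. *)
From HB Require Import structures.
From mathcomp Require Import all_boot all_order all_algebra.
Set Implicit Arguments. Unset Strict Implicit. Unset Printing Implicit Defensive.
Import Order.TTheory GRing.Theory Num.Theory.
Local Open Scope ring_scope.

(* Basis of K = H_1 (x) ... (x) H_n, with H_i = C^(d i): tuples of basis indices. *)
Definition basis (n : nat) (d : 'I_n -> nat) : finType :=
  {dffun forall i : 'I_n, 'I_(d i)}.

(* Operators on the space with orthonormal basis indexed by T (matrix entries). *)
Definition op (C : Type) (T : finType) := T -> T -> C.

Section Ops.
Variables (C : numClosedFieldType) (T : finType).

Definition opmul (X Y : op C T) : op C T := fun a b => \sum_c X a c * Y c b.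
Definition optr (X : op C T) : C := \sum_a X a a.
Definition op_hermitian (X : op C T) : Prop := forall a b, X b a = (X a b)^*.

Definition expect (rho X : op C T) : C := optr (opmul rho X).
Definition variance (rho X : op C T) : C :=
  expect rho (opmul X X) - (expect rho X) ^+ 2.
End Ops.

Definition density_matrix (C : numClosedFieldType) (m : nat) (r : 'M[C]_m) : Prop :=
  (forall x y, r y x = (r x y)^*) /\
  (forall v : 'I_m -> C, 0 <= \sum_x \sum_y (v x)^* * r x y * v y) /\
  \tr r = 1.

Section Product.
Variables (C : numClosedFieldType) (n : nat) (d : 'I_n -> nat).
Variable rho : forall i : 'I_n, 'M[C]_(d i).

Definition prod_state : op C (basis d) :=
  fun a b => \prod_(i < n) rho i (a i) (b i).

(* E_i X = Tr_i[(rho_i (x) I) X], tensored with the identity on H_i: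
   (E_i X)(a,b) = [a_i = b_i] * sum_{k,l} rho_i(k,l) X(a[i:=l], b[i:=k]). *)
Definition condE (i : 'I_n) (X : op C (basis d)) : op C (basis d) :=
  fun a b => (a i == b i)%:R *
    \sum_(a' : basis d) \sum_(b' : basis d)
      (if [forall j, (j != i) ==> ((a' j == a j) && (b' j == b j))]
       then rho i (b' i) (a' i) * X a' b' else 0).

Definition condD (i : 'I_n) (X : op C (basis d)) : op C (basis d) :=
  fun a b => X a b - condE i X a b.
End Product.

(* Main.v *)
Require Import Defs.
From HB Require Import structures.
From mathcomp Require Import all_boot all_order all_algebra.
From mathcomp Require Import ring sesquilinear spectral.
From Stdlib Require Import FunctionalExtensionality.
Set Implicit Arguments. Unset Strict Implicit. Unset Printing Implicit Defensive.
Import Order.TTheory GRing.Theory Num.Theory.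
Local Open Scope ring_scope.
Local Open Scope sesquilinear_scope.

Lemma sum_prod_dffun (R : comNzRingType) (I : finType) (T_ : I -> finType)
  (F : forall i : I, T_ i -> R) :
  \sum_(a : {dffun forall i : I, T_ i}) \prod_(i : I) F i (a i) =
  \prod_(i : I) \sum_(k : T_ i) F i k.
Proof.
pose P_ := fun i => [ffun k : T_ i => F i k].
transitivity (\prod_(i : I) \sum_(k : T_ i) P_ i k); last first.
  by apply: eq_bigr => i _; apply: eq_bigr => k _; rewrite ffunE.
under eq_bigr => i _ do rewrite (big_tag (fun i (k : T_ i) => P_ i k) i).
rewrite bigA_distr_big_dep -(big_fprod _ _ P_).
rewrite (reindex (@fprod_of_dffun _ T_)); last first.
  exact/onW_bij/fprod_of_dffun_bij.
apply: eq_bigr => a _; apply: eq_bigr => i _; rewrite ffunE.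
by rewrite /fprod_of_dffun fprodE.
Qed.

Lemma sum2_prod_dffun (R : comNzRingType) (I : finType) (T_ : I -> finType)
  (F : forall i : I, T_ i -> T_ i -> R) :
  \sum_(a : {dffun forall i : I, T_ i}) \sum_(b : {dffun forall i : I, T_ i})
     \prod_(i : I) F i (a i) (b i) =
  \prod_(i : I) \sum_(k : T_ i) \sum_(l : T_ i) F i k l.
Proof.
rewrite -(sum_prod_dffun (fun i k => \sum_l F i k l)).
apply: eq_bigr => a _; exact: (sum_prod_dffun (fun i l => F i (a i) l)).
Qed.

Lemma sum_only (R : nmodType) (I : finType) (F : I -> R) (x : I) :
  (forall k, k != x -> F k = 0) -> \sum_k F k = F x.
Proof. by move=> H; rewrite (bigD1 x) //= big1 ?addr0. Qed.

Lemma prod_nat_bool (R : comNzRingType) (I : finType) (P B : pred I) :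
  \prod_(j | P j) ((B j)%:R : R) = ([forall j, P j ==> B j])%:R.
Proof.
case: forallP => [H|H].
  by rewrite big1 // => j Pj; rewrite (implyP (H j) Pj).
have [j Hj] : exists j, ~~ (P j ==> B j).
  by apply/existsP; rewrite -negb_forall; apply/forallP.
move: Hj; rewrite negb_imply => /andP[Pj /negbTE Bj].
by rewrite (bigD1 j) //= Bj mul0r.
Qed.

Ltac offd := let k := fresh "k" in let hk := fresh "hk" in let hk' := fresh "hk'" in
  move=> k hk; have hk' := hk; rewrite eq_sym in hk';
  rewrite ?(negbTE hk) ?(negbTE hk') /= ?(mulr0, mul0r, mulr0n, mul0rn) //.

Section QES.
Variables (C : numClosedFieldType) (n : nat) (d : 'I_n -> nat).
Variable rho : forall i : 'I_n, 'M[C]_(d i).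
Local Notation T := (basis d).
Local Notation rhoP := (prod_state rho).

Hypothesis hherm : forall i x y, rho i y x = (rho i x y)^*.
Hypothesis htr : forall i, \tr (rho i) = 1.

Definition w (S : {set 'I_n}) (j : 'I_n) (x y x' y' : 'I_(d j)) : C :=
  if j \in S then (x == y)%:R * rho j y' x' else (x' == x)%:R * (y' == y)%:R.
Arguments w S j x y x' y' : clear implicits.

Definition ES (S : {set 'I_n}) (X : op C T) : op C T := fun a b =>
  \sum_(a' : T) \sum_(b' : T) (\prod_(j : 'I_n) w S j (a j) (b j) (a' j) (b' j)) * X a' b'.

Definition ip (X Y : op C T) : C :=
  \sum_(c : T) \sum_(a : T) \sum_(b : T) rhoP a b * (X c b)^* * Y c a.

Lemma w_comp S R j x y x'' y'' :
  \sum_k \sum_l w S j x y k l * w R j k l x'' y'' = w (S :|: R) j x y x'' y''.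
Proof.
rewrite /w in_setU; case: (j \in S); case: (j \in R) => /=.
- under eq_bigr => k _.
    rewrite (@sum_only _ _ _ k); last by offd.
    cbv beta; over.
  under eq_bigr => k _ do rewrite eqxx.
  have := htr j; rewrite /mxtrace => H.
  transitivity ((x == y)%:R * rho j y'' x'' * \sum_k rho j k k); last by rewrite H mulr1.
  rewrite big_distrr /=; apply: eq_bigr => k _; ring.
- rewrite (@sum_only _ _ _ x''); last first.
    by move=> k hk; apply: big1 => l _; rewrite (eq_sym x'' k) (negbTE hk) /= !(mulr0, mul0r).
  rewrite (@sum_only _ _ _ y''); last by offd.
  rewrite !eqxx /=; ring.
- under eq_bigr => k _.
    rewrite (@sum_only _ _ _ y); last by offd.
    cbv beta; over.
  rewrite (@sum_only _ _ _ x); last by offd.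
  rewrite !eqxx /=; ring.
- under eq_bigr => k _.
    rewrite (@sum_only _ _ _ y); last by offd.
    cbv beta; over.
  rewrite (@sum_only _ _ _ x); last by offd.
  rewrite !eqxx /=; ring.
Qed.


Lemma reorder4 (I J : finType) (A : I -> I -> C) (B : I -> I -> J -> J -> C)
  (Xf : J -> J -> C) :
  \sum_i1 \sum_i2 A i1 i2 * (\sum_j1 \sum_j2 B i1 i2 j1 j2 * Xf j1 j2) =
  \sum_j1 \sum_j2 (\sum_i1 \sum_i2 A i1 i2 * B i1 i2 j1 j2) * Xf j1 j2.
Proof.
under [RHS]eq_bigr => j1 _ do under eq_bigr => j2 _ do
  rewrite big_distrl /=.
under [RHS]eq_bigr => j1 _ do under eq_bigr => j2 _ do under eq_bigr => i1 _ do
  rewrite big_distrl /=.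
under [LHS]eq_bigr => i1 _ do under eq_bigr => i2 _ do rewrite mulr_sumr.
under [LHS]eq_bigr => i1 _ do under eq_bigr => i2 _ do under eq_bigr => j1 _ do
  rewrite mulr_sumr.
under [LHS]eq_bigr => i1 _ do rewrite exchange_big.
under [LHS]eq_bigr => i1 _ do under eq_bigr => j1 _ do rewrite exchange_big.
rewrite [LHS]exchange_big; apply: eq_bigr => j1 _.
rewrite [LHS]exchange_big; apply: eq_bigr => j2 _.
apply: eq_bigr => i1 _; apply: eq_bigr => i2 _; ring.
Qed.

Lemma ES_comp S R X : ES S (ES R X) = ES (S :|: R) X.
Proof.
apply: functional_extensionality => a; apply: functional_extensionality => b.
rewrite /ES reorder4; apply: eq_bigr => a'' _; apply: eq_bigr => b'' _.
congr (_ * _).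
under eq_bigr => a' _ do under eq_bigr => b' _ do rewrite -big_split /=.
rewrite (sum2_prod_dffun (fun j k l => w S j (a j) (b j) k l * w R j k l (a'' j) (b'' j))).
by apply: eq_bigr => j _; rewrite w_comp.
Qed.


Lemma dffun_eqE (a a' : T) : [forall j, a' j == a j] = (a' == a).
Proof.
apply/forallP/eqP => [H|->//]; apply/ffunP => j; exact/eqP/H.
Qed.

Lemma condE_ES i X : condE rho i X = ES [set i] X.
Proof.
apply: functional_extensionality => a; apply: functional_extensionality => b.
rewrite /condE /ES mulr_sumr; apply: eq_bigr => a' _.
rewrite mulr_sumr; apply: eq_bigr => b' _.
rewrite (bigD1 i) //= {1}/w in_set1 eqxx.
rewrite (eq_bigr (fun j => ((a' j == a j) && (b' j == b j))%:R)); last first.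
  by move=> j hj; rewrite /w in_set1 (negbTE hj) -natrM mulnb.
rewrite prod_nat_bool.
case: [forall _, _]; rewrite /=; ring.
Qed.

Lemma prodw0 (a b a' b' : T) :
  \prod_j w set0 j (a j) (b j) (a' j) (b' j) = (a' == a)%:R * (b' == b)%:R.
Proof.
rewrite (eq_bigr (fun j => (a' j == a j)%:R * (b' j == b j)%:R)); last first.
  by move=> j _; rewrite /w in_set0.
by rewrite big_split /= !prod_nat_bool -!dffun_eqE.
Qed.

Lemma ES0 X : ES set0 X = X.
Proof.
apply: functional_extensionality => a; apply: functional_extensionality => b.
rewrite /ES.
under eq_bigr => a' _ do under eq_bigr => b' _ do rewrite prodw0.
rewrite (@sum_only _ _ _ a); last first.
  by move=> a' ha; apply: big1 => b' _; rewrite (negbTE ha) !mul0r.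
rewrite (@sum_only _ _ _ b); last by offd.
by rewrite !eqxx !mul1r.
Qed.

Lemma prodwT (a b a' b' : T) :
  \prod_j w setT j (a j) (b j) (a' j) (b' j) = (a == b)%:R * rhoP b' a'.
Proof.
rewrite (eq_bigr (fun j => (a j == b j)%:R * rho j (b' j) (a' j))); last first.
  by move=> j _; rewrite /w in_setT.
by rewrite big_split /= prod_nat_bool -dffun_eqE.
Qed.

Lemma EST X : ES setT X = fun a b => (a == b)%:R * expect rhoP X.
Proof.
apply: functional_extensionality => a; apply: functional_extensionality => b.
rewrite /ES /expect /optr /opmul /prod_state.
under eq_bigr => a' _ do under eq_bigr => b' _ do rewrite prodwT.
rewrite mulr_sumr [LHS]exchange_big; apply: eq_bigr => b' _.
rewrite mulr_sumr; apply: eq_bigr => a' _; rewrite /prod_state; ring.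
Qed.

Lemma ES_sub S X Y : ES S (fun a b => X a b - Y a b) = fun a b => ES S X a b - ES S Y a b.
Proof.
apply: functional_extensionality => a; apply: functional_extensionality => b.
rewrite /ES -sumrB; apply: eq_bigr => a' _; rewrite -sumrB; apply: eq_bigr => b' _.
by rewrite mulrBr.
Qed.

Lemma w_conj S j x y x' y' : (w S j x y y' x')^* = w S j y x x' y'.
Proof.
rewrite /w; case: (j \in S); rewrite rmorphM /= !conjC_nat.
  by rewrite -hherm eq_sym.
by rewrite mulrC.
Qed.

Lemma ES_herm S X : op_hermitian X -> op_hermitian (ES S X).
Proof.
move=> hX a b; rewrite /ES rmorph_sum /=.
under [RHS]eq_bigr => ? _ do rewrite rmorph_sum /=.
rewrite [RHS]exchange_big.
apply: eq_bigr => a' _; apply: eq_bigr => b' _.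
rewrite rmorphM rmorph_prod /= -hX; congr (_ * _).
by apply: eq_bigr => j _; rewrite w_conj.
Qed.

Lemma swap22 (F : T -> T -> T -> T -> C) :
  \sum_r \sum_s \sum_p \sum_q F r s p q = \sum_p \sum_q \sum_r \sum_s F r s p q.
Proof.
transitivity (\sum_r \sum_p \sum_s \sum_q F r s p q).
  by apply: eq_bigr => r _; rewrite exchange_big.
rewrite exchange_big; apply: eq_bigr => p _.
transitivity (\sum_r \sum_q \sum_s F r s p q).
  by apply: eq_bigr => r _; rewrite exchange_big.
by rewrite exchange_big.
Qed.

Lemma ip_kernel (K K' : T -> T -> T -> T -> C) X Y :
  (forall p q r s, \sum_b rhoP s b * (K r b p q)^* = \sum_a rhoP a q * K' p a r s) ->
  ip (fun a b => \sum_a' \sum_b' K a b a' b' * X a' b') Y =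
  ip X (fun a b => \sum_a' \sum_b' K' a b a' b' * Y a' b').
Proof.
move=> hK.
pose G p q r s := (\sum_b rhoP s b * (K r b p q)^*) * ((X p q)^* * Y r s).
transitivity (\sum_p \sum_q \sum_r \sum_s G p q r s).
  rewrite /ip.
  transitivity (\sum_c \sum_a \sum_b \sum_p \sum_q
     rhoP a b * (K c b p q)^* * (X p q)^* * Y c a).
    apply: eq_bigr => c _; apply: eq_bigr => a _; apply: eq_bigr => b _.
    rewrite rmorph_sum mulr_sumr mulr_suml; apply: eq_bigr => p _.
    rewrite rmorph_sum mulr_sumr mulr_suml; apply: eq_bigr => q _.
    rewrite rmorphM /=; ring.
  transitivity (\sum_c \sum_a \sum_p \sum_q \sum_b
     rhoP a b * (K c b p q)^* * (X p q)^* * Y c a).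
    apply: eq_bigr => c _; apply: eq_bigr => a _; rewrite exchange_big.
    by apply: eq_bigr => p _; rewrite exchange_big.
  transitivity (\sum_r \sum_s \sum_p \sum_q G p q r s); last first.
    exact: (swap22 (fun r s p q => G p q r s)).
  apply: eq_bigr => c _; apply: eq_bigr => a _.
  apply: eq_bigr => p _; apply: eq_bigr => q _.
  rewrite /G mulr_suml; apply: eq_bigr => b _; ring.
rewrite /ip; symmetry.
transitivity (\sum_c \sum_a \sum_b \sum_r \sum_s
     rhoP a b * (X c b)^* * K' c a r s * Y r s).
  apply: eq_bigr => c _; apply: eq_bigr => a _; apply: eq_bigr => b _.
  rewrite /= mulr_sumr; apply: eq_bigr => r _.
  rewrite mulr_sumr; apply: eq_bigr => s _; ring.
apply: eq_bigr => p _.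
transitivity (\sum_q \sum_a \sum_r \sum_s
     rhoP a q * (X p q)^* * K' p a r s * Y r s).
  by rewrite exchange_big.
apply: eq_bigr => q _.
transitivity (\sum_r \sum_a \sum_s
     rhoP a q * (X p q)^* * K' p a r s * Y r s).
  by rewrite exchange_big.
apply: eq_bigr => r _; rewrite exchange_big; apply: eq_bigr => s _.
rewrite /G hK mulr_suml; apply: eq_bigr => a _; ring.
Qed.

Lemma w_adj S j (p q r s : 'I_(d j)) :
  \sum_k rho j s k * (w S j r k p q)^* = \sum_k rho j k q * w S j p k r s.
Proof.
rewrite /w; case: (j \in S).
  rewrite (@sum_only _ _ _ r); last first.
    by move=> k hk; rewrite (eq_sym r k) (negbTE hk) /= mul0r rmorph0 mulr0.
  rewrite (@sum_only _ _ _ p); last by offd.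
  rewrite !eqxx rmorphM /= conjC_nat -hherm; ring.
rewrite (@sum_only _ _ _ q); last first.
  by move=> k hk; rewrite (eq_sym q k) (negbTE hk) /= mulr0 rmorph0 mulr0.
rewrite (@sum_only _ _ _ s); last by offd.
rewrite !eqxx !rmorphM /= !conjC_nat (eq_sym p r); ring.
Qed.

Lemma ES_selfadj S X Y : ip (ES S X) Y = ip X (ES S Y).
Proof.
apply: ip_kernel => p q r s.
under eq_bigr => b _ do rewrite rmorph_prod /prod_state -big_split /=.
rewrite (sum_prod_dffun (fun j k => rho j (s j) k * (w S j (r j) k (p j) (q j))^*)).
under [RHS]eq_bigr => a _ do rewrite -big_split /=.
rewrite (sum_prod_dffun (fun j k => rho j k (q j) * w S j (p j) k (r j) (s j))).
by apply: eq_bigr => j _; rewrite w_adj.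
Qed.

Lemma rhoP_conj a b : (rhoP a b)^* = rhoP b a.
Proof. by rewrite /prod_state rmorph_prod; apply: eq_bigr => j _; rewrite [RHS]hherm. Qed.

Lemma ip_sym X Y : ip Y X = (ip X Y)^*.
Proof.
rewrite /ip rmorph_sum; apply: eq_bigr => c _.
rewrite rmorph_sum exchange_big; apply: eq_bigr => a _.
rewrite rmorph_sum; apply: eq_bigr => b _.
rewrite !rmorphM /= rhoP_conj conjCK; ring.
Qed.

Lemma ip_addl X Y Z : ip (fun a b => X a b + Y a b) Z = ip X Z + ip Y Z.
Proof.
rewrite /ip -big_split; apply: eq_bigr => c _.
rewrite -big_split; apply: eq_bigr => a _.
rewrite -big_split; apply: eq_bigr => b _.
rewrite rmorphD /=; ring.
Qed.

Lemma ip_subl X Y Z : ip (fun a b => X a b - Y a b) Z = ip X Z - ip Y Z.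
Proof.
rewrite /ip -sumrB; apply: eq_bigr => c _.
rewrite -sumrB; apply: eq_bigr => a _.
rewrite -sumrB; apply: eq_bigr => b _.
rewrite rmorphB /=; ring.
Qed.

Lemma ip_addr X Y Z : ip Z (fun a b => X a b + Y a b) = ip Z X + ip Z Y.
Proof. by rewrite ip_sym ip_addl rmorphD /= -!ip_sym. Qed.

Lemma ip_subr X Y Z : ip Z (fun a b => X a b - Y a b) = ip Z X - ip Z Y.
Proof. by rewrite ip_sym ip_subl rmorphB /= -!ip_sym. Qed.

Lemma ip0l Z : ip (fun _ _ => 0) Z = 0.
Proof.
rewrite /ip big1 // => c _; rewrite big1 // => a _; rewrite big1 // => b _.
by rewrite rmorph0 mulr0 mul0r.
Qed.

Lemma ip_suml (Xs : nat -> op C T) m Z :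
  ip (fun a b => \sum_(0 <= k < m) Xs k a b) Z = \sum_(0 <= k < m) ip (Xs k) Z.
Proof.
elim: m => [|m IH].
  rewrite big_geq //.
  rewrite (_ : (fun a b => \sum_(0 <= k < 0) Xs k a b) = fun _ _ => 0) ?ip0l //.
  by apply: functional_extensionality => a; apply: functional_extensionality => b;
    rewrite big_geq.
rewrite big_nat_recr //= -IH -ip_addl; congr ip.
by apply: functional_extensionality => a; apply: functional_extensionality => b;
    rewrite big_nat_recr.
Qed.

Lemma ip_sumr (Xs : nat -> op C T) m Z :
  ip Z (fun a b => \sum_(0 <= k < m) Xs k a b) = \sum_(0 <= k < m) ip Z (Xs k).
Proof.
rewrite ip_sym ip_suml rmorph_sum; apply: eq_bigr => k _; by rewrite [RHS]ip_sym.
Qed.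

Lemma expect_sq Y : op_hermitian Y -> expect rhoP (opmul Y Y) = ip Y Y.
Proof.
move=> hY; rewrite /expect /optr /opmul /ip [RHS]exchange_big.
apply: eq_bigr => a _; rewrite [RHS]exchange_big; apply: eq_bigr => b _.
rewrite mulr_sumr; apply: eq_bigr => e _; rewrite -hY; ring.
Qed.

Lemma ip_delta X c : op_hermitian X ->
  ip X (fun a b => (a == b)%:R * c) = c * expect rhoP X.
Proof.
move=> hX; rewrite /ip /expect /optr /opmul exchange_big mulr_sumr.
apply: eq_bigr => a _.
rewrite (@sum_only _ _ _ a); last first.
  by move=> e he; apply: big1 => b _; rewrite (negbTE he) /= !(mulr0, mul0r).
rewrite mulr_sumr; apply: eq_bigr => b _; rewrite eqxx -hX /=; ring.
Qed.

Lemma ES_idem S X : ES S (ES S X) = ES S X.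
Proof. by rewrite ES_comp setUid. Qed.

Hypothesis hpsd : forall i (v : 'I_(d i) -> C),
  0 <= \sum_x \sum_y (v x)^* * rho i x y * v y.

Local Notation Pj j := (spectralmx (rho j)).
Local Notation lam j k := (spectral_diag (rho j) 0 k).

Lemma rho_normal j : rho j \is normalmx.
Proof.
apply/normalmxP.
have -> : (rho j) ^t* = rho j.
  by apply/matrixP => x y; rewrite !mxE -hherm.
by [].
Qed.

Lemma rho_spec j x y : rho j x y = \sum_k (Pj j k x)^* * lam j k * Pj j k y.
Proof.
have E := orthomx_spectralP (rho_normal j).
rewrite {1}E invmx_unitary ?spectral_unitarymx // mul_mx_diag !mxE.
by apply: eq_bigr => k _; rewrite !mxE.
Qed.

Lemma unit_entry j k l : \sum_x Pj j k x * (Pj j l x)^* = (k == l)%:R.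
Proof.
have /unitarymxP/matrixP/(_ k l) := spectral_unitarymx (rho j).
by rewrite !mxE => <-; apply: eq_bigr => x _; rewrite !mxE.
Qed.

Lemma lam_ge0 j k : 0 <= lam j k.
Proof.
have := hpsd (fun y => (Pj j k y)^*).
have -> : \sum_x \sum_y ((Pj j k x)^*)^* * rho j x y * (Pj j k y)^* =
   \sum_l lam j l * ((\sum_x Pj j k x * (Pj j l x)^*) *
                     (\sum_y Pj j l y * (Pj j k y)^*)).
  transitivity (\sum_x \sum_y \sum_l
     lam j l * ((Pj j k x * (Pj j l x)^*) * (Pj j l y * (Pj j k y)^*))).
    apply: eq_bigr => x _; apply: eq_bigr => y _.
    rewrite rho_spec conjCK mulr_sumr mulr_suml; apply: eq_bigr => l _; ring.
  transitivity (\sum_x \sum_l \sum_y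
     lam j l * ((Pj j k x * (Pj j l x)^*) * (Pj j l y * (Pj j k y)^*))).
    by apply: eq_bigr => x _; rewrite exchange_big.
  rewrite exchange_big; apply: eq_bigr => l _.
  rewrite [RHS]mulrA [RHS]mulr_sumr [LHS]exchange_big; apply: eq_bigr => y _.
  rewrite (_ : forall (u v : C) (f : 'I_(d j) -> C), u * (\sum_x f x) * v = \sum_x u * f x * v); last first.
    by move=> u v f; rewrite mulr_sumr mulr_suml.
  apply: eq_bigr => x _; ring.
rewrite (@sum_only _ _ _ k); last first.
  by move=> l hl; rewrite !unit_entry (eq_sym k l) (negbTE hl) /= !(mulr0, mul0r).
by rewrite !unit_entry eqxx /= mulr1 mulr1.
Qed.


Definition Lk (k : T) : C := \prod_j lam j (k j).
Definition Vk (k a : T) : C := \prod_j Pj j (k j) (a j).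

Lemma rhoP_decomp a b : rhoP a b = \sum_k Lk k * (Vk k a)^* * Vk k b.
Proof.
rewrite /prod_state.
under eq_bigr => j _ do rewrite rho_spec.
rewrite -(sum_prod_dffun (fun j k => (Pj j k (a j))^* * lam j k * Pj j k (b j))).
apply: eq_bigr => k _; rewrite /Lk /Vk rmorph_prod -!big_split /=.
by apply: eq_bigr => j _; ring.
Qed.

Lemma distr2 (I : finType) (u : C) (f g : I -> C) :
  u * ((\sum_a f a) * (\sum_b g b)) = \sum_a \sum_b u * f a * g b.
Proof.
rewrite big_distrlr mulr_sumr; apply: eq_bigr => a _.
rewrite mulr_sumr; apply: eq_bigr => b _; exact: mulrA.
Qed.

Lemma ip_ge0 W : 0 <= ip W W.
Proof.
have -> : ip W W = \sum_e \sum_k Lk k *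
    ((\sum_a (Vk k a)^* * W e a) * (\sum_b (Vk k b)^* * W e b)^*).
  rewrite /ip; apply: eq_bigr => e _.
  under [RHS]eq_bigr => k _ do rewrite rmorph_sum distr2.
  transitivity (\sum_a \sum_b \sum_k
      Lk k * ((Vk k a)^* * W e a) * ((Vk k b)^* * W e b)^*).
    apply: eq_bigr => a _; apply: eq_bigr => b _.
    rewrite rhoP_decomp !mulr_suml; apply: eq_bigr => k _.
    rewrite !rmorphM /= conjCK; ring.
  transitivity (\sum_a \sum_k \sum_b
      Lk k * ((Vk k a)^* * W e a) * ((Vk k b)^* * W e b)^*).
    by apply: eq_bigr => a _; rewrite exchange_big.
  by rewrite exchange_big.
apply: sumr_ge0 => e _; apply: sumr_ge0 => k _.
apply: mulr_ge0; first by apply: prodr_ge0 => j _; exact: lam_ge0.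
exact: mul_conjC_ge0.
Qed.

Lemma ip_proj_res S W :
  ip (fun a b => W a b - ES S W a b) (fun a b => W a b - ES S W a b) =
  ip W W - ip W (ES S W).
Proof.
rewrite ip_subl !ip_subr [ip (ES S W) (ES S W)]ES_selfadj ES_idem [ip (ES S W) W]ES_selfadj; ring.
Qed.

Lemma ip_ortho S Y Z : ip (fun a b => Y a b - ES S Y a b) (ES S Z) = 0.
Proof. by rewrite ip_subl ES_selfadj ES_idem subrr. Qed.

Lemma contraction S W : ip (ES S W) (ES S W) <= ip W W.
Proof.
rewrite ES_selfadj ES_idem.
have := ip_ge0 (fun a b => W a b - ES S W a b); rewrite ip_proj_res.
by rewrite subr_ge0.
Qed.

Definition Sm (m : nat) : {set 'I_n} := [set j : 'I_n | (j < m)%N].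
Definition F m X := ES (Sm m) X.
Definition t X k : op C T := fun a b => F k X a b - F k.+1 X a b.

Lemma Sm_succ (i : 'I_n) : Sm i.+1 = Sm i :|: [set i].
Proof. by apply/setP => j; rewrite !inE ltnS leq_eqVlt orbC. Qed.

Lemma Sm_absorb (i : 'I_n) m : (i < m)%N -> [set i] :|: Sm m = Sm m.
Proof. by move=> him; apply/setUidPr; rewrite sub1set inE. Qed.

Lemma Sm0 : Sm 0 = set0.
Proof. by apply/setP => j; rewrite !inE. Qed.

Lemma SmT : Sm n = setT.
Proof. by apply/setP => j; rewrite !inE ltn_ord. Qed.

Lemma t_proj (i : 'I_n) m X : (i < m)%N -> ES [set i] (t X m) = t X m.
Proof.
move=> him; rewrite /t ES_sub /F !ES_comp !Sm_absorb //; exact: ltnW.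
Qed.

Lemma t_res (i : 'I_n) X : t X i = fun a b => F i X a b - ES [set i] (F i X) a b.
Proof. by rewrite /t /F ES_comp setUC Sm_succ. Qed.

Lemma ortho (i : 'I_n) m X : (i < m)%N -> ip (t X i) (t X m) = 0.
Proof. by move=> him; rewrite t_res -(t_proj X him) ip_ortho. Qed.

Lemma condD_ES i X : condD rho i X = fun a b => X a b - ES [set i] X a b.
Proof. by rewrite /condD condE_ES. Qed.

Lemma t_D (i : 'I_n) X : t X i = F i (condD rho i X).
Proof. by rewrite condD_ES /F ES_sub ES_comp -Sm_succ. Qed.

Definition Ssum X m : op C T := fun a b => \sum_(0 <= k < m) t X k a b.

Lemma pythagoras X m : (m <= n)%N ->
  ip (Ssum X m) (Ssum X m) = \sum_(0 <= k < m) ip (t X k) (t X k).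
Proof.
elim: m => [|m IH] hm.
  rewrite big_geq // (_ : Ssum X 0 = fun _ _ => 0) ?ip0l //.
  by apply: functional_extensionality => a; apply: functional_extensionality => b;
    rewrite /Ssum big_geq.
have -> : Ssum X m.+1 = fun a b => Ssum X m a b + t X m a b.
  by apply: functional_extensionality => a; apply: functional_extensionality => b;
    rewrite /Ssum big_nat_recr.
have h0 : ip (Ssum X m) (t X m) = 0.
  rewrite /Ssum ip_suml big_nat_cond big1 // => k /andP[/andP[_ hk] _].
  have hkn : (k < n)%N by apply: ltn_trans hk hm.
  exact: (@ortho (Ordinal hkn) m X hk).
rewrite ip_addl (ip_addr (Ssum X m) (t X m) (Ssum X m)) (ip_addr (Ssum X m) (t X m) (t X m)).
rewrite IH ?(ltnW hm) // h0 ip_sym h0 rmorph0 big_nat_recr //=.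
by rewrite addr0 add0r.
Qed.

Lemma telescope_gen X m a b :
  F 0 X a b - F m X a b = \sum_(0 <= k < m) t X k a b.
Proof.
elim: m => [|m IH]; first by rewrite big_geq // subrr.
by rewrite big_nat_recr //= -IH /t; ring.
Qed.

Lemma telescope X : (fun a b => X a b - ES setT X a b) = Ssum X n.
Proof.
apply: functional_extensionality => a; apply: functional_extensionality => b.
rewrite /Ssum -telescope_gen /F Sm0 ES0 SmT //.
Qed.

Lemma D_herm (i : 'I_n) X : op_hermitian X -> op_hermitian (condD rho i X).
Proof.
move=> hX; rewrite condD_ES => a b.
by rewrite rmorphB /= -hX -(ES_herm _ hX).
Qed.

Lemma main X : op_hermitian X ->
  variance rhoP X <=
    \sum_(i < n) expect rhoP (opmul (condD rho i X) (condD rho i X)).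
Proof.
move=> hX.
have -> : variance rhoP X = ip (Ssum X n) (Ssum X n).
  rewrite -telescope ip_proj_res EST ip_delta // /variance expect_sq // expr2.
rewrite pythagoras // big_mkord; apply: ler_sum => i _.
rewrite expect_sq; last exact: D_herm.
rewrite t_D; exact: contraction.
Qed.

End QES.

Theorem theorem6p6 (C : numClosedFieldType) (n : nat) (d : 'I_n -> nat)
    (rho : forall i : 'I_n, 'M[C]_(d i))
    (hrho : forall i : 'I_n, density_matrix (rho i))
    (X : op C (basis d)) (hX : op_hermitian X) :
  variance (prod_state rho) X <=
    \sum_(i < n) expect (prod_state rho)
                   (opmul (condD rho i X) (condD rho i X)).
Proof.
apply: main => //.
- by move=> i x y; have [H _] := hrho i; exact: H.
- by move=> i; have [_ [_ H]] := hrho i; exact: H.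
- by move=> i v; have [_ [H _]] := hrho i; exact: H.
Qed.
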